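(* Let $1\le p<\infty$ and let $n\ge m\ge 0$ be integers with $n-m\equiv 0\pmod 2$. Then $$\left[\sum_{i=0}^{\frac{n-m-2}{2}}2\binom{n}{i}^p+\sum_{i=0}^{m}\left[\binom{m}{i}+\binom{n}{\frac{n-m}{2}+i}\right]^p\right]^{1/p} \le \Big[\sum_{i=0}^{n}\binom{n}{i}^p\Big]^{1/p}+\Big[\sum_{i=0}^{m}\binom{m}{i}^p\Big]^{1/p},$$ where the first sum on the left is empty (zero) when $n=m$.
   Context: Binomial coefficients have their usual meaning. *)

(* Defs.v *)
From HB Require Import structures.
From mathcomp Require Import all_boot all_order all_algebra.
From mathcomp Require Import all_classical all_reals.
From mathcomp Require Import exp.
Set Implicit Arguments. Unset Strict Implicit. Unset Printing Implicit Defensive.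

(* Main.v *)
Require Import Defs.
From HB Require Import structures.
From mathcomp Require Import all_boot all_order all_algebra.
From mathcomp Require Import all_classical all_reals.
From mathcomp Require Import exp all_analysis.
From mathcomp Require Import zify.
Import Order.TTheory GRing.Theory Num.Theory.
Local Open Scope ring_scope.

Lemma lnorm_fin (R : realType) (p:R) N (f : nat -> R) : 0 < p ->
  (forall k, (N <= k)%N -> f k = 0) ->
 ('N[@counting nat R]_p%:E [EFin \o f] = ((\sum_(k<N) `|f k| `^ p) `^ p^-1)%:E)%E.
Proof.
move=> p0 f0; rewrite Lnorm_counting//.
rewrite (nneseries_split 0 N); last by move=> k _; apply: poweR_ge0.
rewrite add0n eseries0 ?adde0; last first.
  by move=> i Ni _ /=; rewrite f0// normr0 powR0 ?gt_eqF.
rewrite big_mkord.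
rewrite (eq_bigr (fun k : ordinal N => (`|f k| `^ p)%:E)); last first.
  by [].
by rewrite sumEFin poweR_EFin.
Qed.

Lemma mink_fin (R : realType) (p:R) N (f g : nat -> R) : 1 <= p ->
  (\sum_(k<N) `|f k + g k| `^ p) `^ p^-1 <=
  (\sum_(k<N) `|f k| `^ p) `^ p^-1 + (\sum_(k<N) `|g k| `^ p) `^ p^-1.
Proof.
move=> p1.
pose f' k := if (k < N)%N then f k else 0.
pose g' k := if (k < N)%N then g k else 0.
have p0 : 0 < p by apply: lt_le_trans p1.
have := @minkowski_EFin _ nat R (@counting nat R) f' g' p
  (fun _ _ _ => I) (fun _ _ _ => I) p1.
have hf : forall k, (N <= k)%N -> f' k = 0 by move=> k; rewrite /f' ltnNge => ->.
have hg : forall k, (N <= k)%N -> g' k = 0 by move=> k; rewrite /g' ltnNge => ->.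
have hfg : forall k, (N <= k)%N -> (f' \+ g')%R k = 0.
  by move=> k kN /=; rewrite hf // hg // addr0.
rewrite (@lnorm_fin R p N f' p0 hf) (@lnorm_fin R p N g' p0 hg).
rewrite (@lnorm_fin R p N _ p0 hfg).
rewrite -EFinD lee_fin.
have E (h : nat -> R) (h' : nat -> R) : (forall k, (k < N)%N -> h' k = h k) ->
   \sum_(k<N) `|h' k| `^ p = \sum_(k<N) `|h k| `^ p.
  by move=> H; apply: eq_bigr => k _; rewrite H.
rewrite (E f f') ?(E g g') ?(E (fun k => f k + g k) (f' \+ g')) //.
- by move=> k /= kN; rewrite /f' /g' kN.
- by move=> k /= kN; rewrite /g' kN.
- by move=> k /= kN; rewrite /f' kN.
Qed.


Lemma key3 (R : realType) (F : nat -> R) N k m : N = (k + m + k)%N ->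
  \sum_(j < N.+1) F j =
  \sum_(i < k) F i + \sum_(i < m.+1) F (i + k)%N + \sum_(i < k) F (N - i)%N.
Proof.
move=> hN.
have -> : N.+1 = (k + (m.+1 + k))%N by lia.
rewrite big_split_ord big_split_ord /= addrA.
congr (_ + _ + _).
- by apply: eq_bigr => i _; rewrite addnC.
- rewrite (reindex_inj rev_ord_inj) /=; apply: eq_bigr => i _.
  congr F; have := ltn_ord i; lia.
Qed.

Theorem mainTheorem19 (R : realType) (p : R) (n m : nat) :
  1 <= p -> (m <= n)%N -> ~~ odd (n - m) ->
  (\sum_(i < (n - m)./2) 2 * ('C(n, i)%:R `^ p)
     + \sum_(i < m.+1) ('C(m, i)%:R + 'C(n, (n - m)./2 + i)%:R) `^ p) `^ p^-1
  <= (\sum_(i < n.+1) 'C(n, i)%:R `^ p) `^ p^-1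
     + (\sum_(i < m.+1) 'C(m, i)%:R `^ p) `^ p^-1.
Proof.
move=> p1 mn ho.
set k := (n - m)./2.
have hk : n = (k + m + k)%N.
  have := odd_double_half (n - m); rewrite (negbTE ho) add0n -addnn -/k; lia.
have p0 : 0 < p by apply: lt_le_trans p1.
pose f j := ('C(n, j))%:R : R.
pose g j := (if (k <= j)%N then ('C(m, j - k))%:R else 0) : R.
have gl (i : 'I_k) : g i = 0 by rewrite /g leqNgt ltn_ord.
have gr (i : 'I_k) : g (n - i)%N = 0.
  rewrite /g; case: ifP => // _; rewrite bin_small //; have := ltn_ord i; lia.
have gm (i : nat) : g (i + k)%N = ('C(m, i))%:R by rewrite /g leq_addl addnK.
have fr (i : 'I_k) : f (n - i)%N = f i.
  by rewrite /f bin_sub //; have := ltn_ord i; lia.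
have E1 : \sum_(j < n.+1) `|f j + g j| `^ p =
   \sum_(i < k) 2 * ('C(n, i)%:R `^ p)
     + \sum_(i < m.+1) ('C(m, i)%:R + 'C(n, k + i)%:R) `^ p.
  rewrite (@key3 R (fun j => `|f j + g j| `^ p) n k m hk).
  rewrite -addrA (addrC (\sum_(i < m.+1) _)) addrA -big_split /=.
  congr (_ + _).
    apply: eq_bigr => i _; rewrite gl gr fr !addr0 /f !ger0_norm ?ler0n //.
    by rewrite mulr_natl mulr2n.
  by apply: eq_bigr => i _; rewrite gm ger0_norm ?ler0n /f addrC addnC.
have E2 : \sum_(j < n.+1) `|f j| `^ p = \sum_(i < n.+1) 'C(n, i)%:R `^ p.
  by apply: eq_bigr => i _; rewrite /f ger0_norm ?ler0n.
have E3 : \sum_(j < n.+1) `|g j| `^ p = \sum_(i < m.+1) 'C(m, i)%:R `^ p.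
  rewrite (@key3 R (fun j => `|g j| `^ p) n k m hk).
  rewrite big1; last by move=> i _; rewrite gl normr0 powR0 ?gt_eqF.
  rewrite [X in _ + X]big1; last by move=> i _; rewrite gr normr0 powR0 ?gt_eqF.
  rewrite add0r addr0; apply: eq_bigr => i _; by rewrite gm ger0_norm ?ler0n.
have := @mink_fin R p n.+1 f g p1.
by rewrite E1 E2 E3.
Qed.
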